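(* Let $M\in\mathbb{N}$, $M\ge2$, and let $r$ be a strong solution of the BVP. Then $d(0):=\lim_{R\to0}d(R)=0$, and exactly one of the following occurs: (i) $r$ is a delayed lift-off function, i.e. there exists $0<\delta<1$ with $r\equiv0$ on $[0,\delta]$; in this case $r\in C^\infty([0,1])$; (ii) $r$ lifts off immediately, i.e. $r>0$ and $\dot r>0$ on $(0,1]$; in this case $r\in C^1([0,1])$ and $\dot r(0)=0$.
   Context: Fix constants $\gamma>0$, $s_0\ge0$, $\kappa\ge-\gamma s_0$ and a convex function $\rho\in C^\infty(\mathbb{R})$ with $\rho(s)=0$ for $s\le0$, $\rho(s)=\gamma s+\kappa$ for $s\ge s_0$, and $\rho=\rho_1$ on $[0,s_0]$ where $\rho_1$ is smooth and convex with $\rho_1(0)=0$, $\rho_1(s_0)=\gamma s_0+\kappa$. For $M\in\mathbb{N}\setminus\{0\}$ and a function $r$ on $(0,1]$ let $d(R)=\frac{Mr(R)\dot r(R)}{R}$ and $Lr(R)=\frac{M^2r}{R}-\dot r-R\ddot r$. A strong solution of the BVP is a function $r\in C([0,1])\cap C^\infty((0,1])$ with $Lr=M\rho''(d)\dot d\,r$ on $(0,1)$, $r(0)=0$ and $r(1)=1$. *)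

(* Defs.v *)
From Stdlib Require Import Reals.
From Coquelicot Require Import Coquelicot.
Open Scope R_scope.

Definition cont_within (D : R -> Prop) (f : R -> R) (x : R) : Prop :=
  forall eps, 0 < eps -> exists delta, 0 < delta /\
    forall y, D y -> Rabs (y - x) < delta -> Rabs (f y - f x) < eps.

Definition deriv_within (D : R -> Prop) (f : R -> R) (l x : R) : Prop :=
  forall eps, 0 < eps -> exists delta, 0 < delta /\
    forall y, D y -> Rabs (y - x) < delta ->
      Rabs (f y - f x - l * (y - x)) <= eps * Rabs (y - x).

(* f is C^infinity on D (derivatives of all orders exist relative to D,
   hence are continuous on D). *)
Definition smooth_on (D : R -> Prop) (f : R -> R) : Prop :=
  exists F : nat -> R -> R,
    (forall x, D x -> F O x = f x) /\
    (forall n x, D x -> deriv_within D (F n) (F (S n) x) x).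

Definition C1_on_with (D : R -> Prop) (f f' : R -> R) : Prop :=
  (forall x, D x -> deriv_within D f (f' x) x) /\
  (forall x, D x -> cont_within D f' x).

Definition Icc01 (x : R) : Prop := 0 <= x <= 1.
Definition Ioc01 (x : R) : Prop := 0 < x <= 1.

Definition dfun (M : nat) (r : R -> R) (x : R) : R :=
  INR M * r x * Derive r x / x.

Definition Lop (M : nat) (r : R -> R) (x : R) : R :=
  INR M ^ 2 * r x / x - Derive r x - x * Derive_n r 2 x.

Definition convex_fun (f : R -> R) : Prop :=
  forall x y t, 0 <= t <= 1 -> f (t * x + (1 - t) * y) <= t * f x + (1 - t) * f y.

Definition rho_hyp (gamma s0 kappa : R) (rho : R -> R) : Prop :=
  0 < gamma /\ 0 <= s0 /\ - gamma * s0 <= kappa /\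
  smooth_on (fun _ => True) rho /\ convex_fun rho /\
  (forall s, s <= 0 -> rho s = 0) /\
  (forall s, s0 <= s -> rho s = gamma * s + kappa) /\
  (exists rho1 : R -> R, smooth_on (fun _ => True) rho1 /\ convex_fun rho1 /\
     rho1 0 = 0 /\ rho1 s0 = gamma * s0 + kappa /\
     forall s, 0 <= s <= s0 -> rho s = rho1 s).

Definition strong_solution (M : nat) (rho r : R -> R) : Prop :=
  (forall x, Icc01 x -> cont_within Icc01 r x) /\
  smooth_on Ioc01 r /\
  (forall x, 0 < x < 1 ->
     Lop M r x = INR M * Derive_n rho 2 (dfun M r x) * Derive (dfun M r) x * r x) /\
  r 0 = 0 /\ r 1 = 1.

Definition delayed_lift_off (r : R -> R) : Prop :=
  exists delta, 0 < delta < 1 /\ forall x, 0 <= x <= delta -> r x = 0.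

Definition lifts_off_immediately (r : R -> R) : Prop :=
  forall x, Ioc01 x -> 0 < r x /\ exists l, 0 < l /\ deriv_within Ioc01 r l x.

(* Main.v *)
Require Import Defs.
From Stdlib Require Import Reals.
From Coquelicot Require Import Coquelicot.
From Stdlib Require Import Lra Psatz Classical.
Open Scope R_scope.


Lemma der_mult (f g : R -> R) (x df dg : R) : is_derive f x df -> is_derive g x dg ->
  is_derive (fun t => f t * g t) x (df * g x + f x * dg).
Proof. intros. apply (is_derive_mult f g x df dg); auto. intros; apply Rmult_comm. Qed.

Lemma der_plus (f g : R -> R) (x df dg : R) : is_derive f x df -> is_derive g x dg ->
  is_derive (fun t => f t + g t) x (df + dg).
Proof. intros. apply (is_derive_plus f g x df dg); auto. Qed.

Lemma der_minus (f g : R -> R) (x df dg : R) : is_derive f x df -> is_derive g x dg ->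
  is_derive (fun t => f t - g t) x (df - dg).
Proof. intros. apply (is_derive_minus f g x df dg); auto. Qed.

Lemma der_const (a x : R) : is_derive (fun _ => a) x 0.
Proof. apply (is_derive_const a x). Qed.

Lemma der_id (x : R) : is_derive (fun t => t) x 1.
Proof. apply (is_derive_id x). Qed.

Lemma der_eq (f : R -> R) (x l l' : R) : is_derive f x l -> l = l' -> is_derive f x l'.
Proof. intros H ->; exact H. Qed.

Lemma der_cont (f : R -> R) (x l : R) : is_derive f x l -> continuity_pt f x.
Proof. intros H. apply is_derive_Reals in H. apply (derivable_continuous_pt f x (exist _ l H)). Qed.

Lemma loc_int a b x : a < x < b -> locally x (fun t => a < t < b).
Proof.
  intros Hx. assert (H: 0 < Rmin (x - a) (b - x)) by (apply Rmin_pos; lra).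
  exists (mkposreal _ H). intros t Ht. unfold ball in Ht; simpl in Ht. unfold AbsRing_ball in Ht.
  unfold abs, minus, plus, opp in Ht; simpl in Ht.
  pose proof (Rmin_l (x-a) (b-x)). pose proof (Rmin_r (x-a) (b-x)).
  apply Rabs_def2 in Ht. lra.
Qed.

Lemma deriv_within_is_derive D f l x a b : a < x < b -> (forall y, a < y < b -> D y) ->
  deriv_within D f l x -> is_derive f x l.
Proof.
  intros Hx HD Hd. apply is_derive_Reals. intros eps Heps.
  destruct (Hd (eps/2)) as [d [Hd0 Hd1]]; [lra|].
  assert (Hm: 0 < Rmin d (Rmin (x-a) (b-x))) by (repeat apply Rmin_pos; lra).
  exists (mkposreal _ Hm). intros h Hh0 Hh. simpl in Hh.
  pose proof (Rmin_l d (Rmin (x-a) (b-x))). pose proof (Rmin_r d (Rmin (x-a) (b-x))).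
  pose proof (Rmin_l (x-a) (b-x)). pose proof (Rmin_r (x-a) (b-x)).
  assert (Hy : a < x+h < b) by (apply Rabs_def2 in Hh; lra).
  assert (Hh' : Rabs (x + h - x) < d) by (replace (x+h-x) with h by ring; lra).
  specialize (Hd1 (x+h) (HD _ Hy) Hh'). replace (x+h-x) with h in Hd1 by ring.
  replace ((f (x + h) - f x) / h - l) with ((f (x + h) - f x - l * h) / h) by (field; auto).
  unfold Rdiv. rewrite Rabs_mult, Rabs_inv.
  assert (0 < Rabs h) by (apply Rabs_pos_lt; auto).
  apply Rle_lt_trans with (eps / 2 * Rabs h * / Rabs h).
  - apply Rmult_le_compat_r; auto. left; apply Rinv_0_lt_compat; auto.
  - field_simplify; lra.
Qed.

Lemma deriv_within_cont D f l x : deriv_within D f l x -> cont_within D f x.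
Proof.
  intros Hd eps Heps. destruct (Hd 1) as [d [Hd0 Hd1]]; [lra|].
  assert (Hp : 0 < Rabs l + 2) by (pose proof (Rabs_pos l); lra).
  assert (Hm: 0 < Rmin d (eps / (Rabs l + 2))) by (apply Rmin_pos; auto; apply Rdiv_lt_0_compat; lra).
  exists (Rmin d (eps / (Rabs l + 2))). split; auto. intros y Dy Hy.
  pose proof (Rmin_l d (eps / (Rabs l + 2))). pose proof (Rmin_r d (eps / (Rabs l + 2))).
  specialize (Hd1 y Dy ltac:(lra)).
  replace (f y - f x) with ((f y - f x - l * (y - x)) + l * (y - x)) by ring.
  eapply Rle_lt_trans. apply Rabs_triang. rewrite Rabs_mult.
  assert (Rabs (y - x) * (Rabs l + 2) < eps).
  { apply Rlt_le_trans with (eps / (Rabs l + 2) * (Rabs l + 2)).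
    apply Rmult_lt_compat_r; lra. right; field; lra. }
  pose proof (Rabs_pos l). pose proof (Rabs_pos (y - x)). nra.
Qed.

Lemma mono_cl (f df : R -> R) (a b : R) : a <= b -> (forall x, a <= x <= b -> is_derive f x (df x)) ->
  (forall x, a <= x <= b -> 0 <= df x) -> f a <= f b.
Proof.
  intros Hab Hd Hp. destruct (Req_dec a b) as [->|Hne]; [lra|].
  pose proof (MVT_gen f a b df) as H. cbv zeta in H.
  rewrite Rmin_left, Rmax_right in H by lra.
  destruct H as [c [Hc Heq]].
  - intros x Hx; apply Hd; lra.
  - intros x Hx; apply (der_cont f x (df x)); apply Hd; lra.
  - specialize (Hp c Hc). nra.
Qed.

Lemma smooth_interior F D a b : (forall n y, D y -> deriv_within D (F n) (F (S n) y) y) ->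
  (forall y, a < y < b -> D y) -> forall n x, a < x < b -> is_derive (F n) x (F (S n) x).
Proof. intros HF HD n x Hx. apply (deriv_within_is_derive D _ _ x a b); auto. Qed.


Definition dfm (m : R) (r p : R -> R) (x : R) : R := m * r x * p x / x.
Definition ddf (m : R) (r p q : R -> R) (x : R) : R :=
  m * ((p x * p x + r x * q x) * x - r x * p x) / x ^ 2.

Definition setup (m : R) (r p q k : R -> R) : Prop :=
  2 <= m /\
  (forall x, 0 < x < 1 -> is_derive r x (p x)) /\
  (forall x, 0 < x < 1 -> is_derive p x (q x)) /\
  (forall x, 0 < x < 1 -> m ^ 2 * r x / x - p x - x * q x = m * k x * ddf m r p q x * r x) /\
  (forall x, 0 < x < 1 -> 0 <= k x) /\
  cont_within Icc01 r 0 /\ r 0 = 0.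

Lemma L1 m r p q k : setup m r p q k -> forall x, 0 < x < 1 ->
  is_derive (dfm m r p) x (ddf m r p q x).
Proof.
  intros [Hm [Hr [Hp _]]] x Hx. unfold dfm.
  apply der_eq with (((m * p x * p x + m * r x * q x) * x - m * r x * p x * 1) / x ^ 2).
  - apply (is_derive_div (fun t => m * r t * p t) (fun t => t)); [| apply der_id | lra].
    apply der_eq with (m * p x * p x + m * r x * q x).
    + apply (der_mult (fun t => m * r t) p); auto. apply is_derive_scal; auto.
    + ring.
  - unfold ddf. field. lra.
Qed.

Lemma L2 m r p q k : setup m r p q k -> forall x, 0 < x < 1 ->
  ddf m r p q x * (x ^ 2 / m + m * k x * (r x * r x)) =
    m ^ 2 * (r x * r x) / x + x * (p x * p x) - 2 * r x * p x /\
  0 < x ^ 2 / m + m * k x * (r x * r x) /\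
  2 * (m - 1) * (r x * p x) <= m ^ 2 * (r x * r x) / x + x * (p x * p x) - 2 * r x * p x /\
  0 <= ddf m r p q x.
Proof.
  intros S x Hx. pose proof S as [Hm [Hr [Hp [HE [Hk _]]]]].
  specialize (HE x Hx). specialize (Hk x Hx).
  set (dd := ddf m r p q x) in *.
  set (A := x ^ 2 / m + m * k x * (r x * r x)).
  set (N := m ^ 2 * (r x * r x) / x + x * (p x * p x) - 2 * r x * p x).
  assert (h1 : dd * (x ^ 2 / m) = (p x * p x + r x * q x) * x - r x * p x).
  { unfold dd, ddf. field. lra. }
  assert (HA : 0 < A).
  { unfold A. assert (0 < x ^ 2 / m) by (apply Rdiv_lt_0_compat; nra).
    assert (0 <= m * k x * (r x * r x)) by (apply Rmult_le_pos; nra). lra. }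
  assert (HN : dd * A = N).
  { unfold A, N. rewrite Rmult_plus_distr_l, h1.
    replace (dd * (m * k x * (r x * r x))) with (r x * (m * k x * dd * r x)) by ring.
    rewrite <- HE. field. lra. }
  assert (Hid : x * (N - 2 * (m - 1) * (r x * p x)) = (m * r x - x * p x) ^ 2)
      by (unfold N; field; lra).
  assert (HN2 : 2 * (m - 1) * (r x * p x) <= N).
  { assert (0 <= x * (N - 2 * (m - 1) * (r x * p x))) by (rewrite Hid; apply pow2_ge_0).
    clearbody N. nra. }
  assert (HN0 : 0 <= N).
  { destruct (Rle_dec 0 (r x * p x)). clearbody N. nra.
    unfold N. assert (0 <= m ^ 2 * (r x * r x) / x).
    { apply Rmult_le_pos. nra. left; apply Rinv_0_lt_compat; lra. }
    nra. }
  repeat split; auto.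
  clearbody dd A N. destruct (Rle_dec 0 dd); auto. nra.
Qed.

Lemma L3 m r p q k : setup m r p q k -> forall x y, 0 < x -> x <= y -> y < 1 ->
  dfm m r p x <= dfm m r p y.
Proof.
  intros S x y Hx Hxy Hy. apply (mono_cl _ (ddf m r p q)); auto.
  - intros t Ht. apply (L1 m r p q k S). lra.
  - intros t Ht. destruct (L2 m r p q k S t ltac:(lra)) as [_ [_ [_ H]]]. exact H.
Qed.

Lemma L4 m r p q k : setup m r p q k -> forall eta, 0 < eta ->
  exists e0, 0 < e0 <= 1 /\ forall e, 0 < e < e0 -> r e * r e < eta.
Proof.
  intros S eta Heta. destruct S as [_ [_ [_ [_ [_ [Hc H0]]]]]].
  destruct (Hc (Rmin 1 eta)) as [d [Hd Hd1]]. apply Rmin_pos; lra.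
  exists (Rmin d 1). split. split. apply Rmin_pos; lra. apply Rmin_r.
  intros e He. pose proof (Rmin_l d 1). pose proof (Rmin_r d 1).
  assert (Hi : Icc01 e) by (unfold Icc01; lra).
  assert (Hb : Rabs (e - 0) < d) by (rewrite Rminus_0_r, Rabs_right; lra).
  specialize (Hd1 e Hi Hb). rewrite H0, Rminus_0_r in Hd1.
  pose proof (Rmin_l 1 eta). pose proof (Rmin_r 1 eta).
  apply Rabs_def2 in Hd1. nra.
Qed.

Lemma Pder m r p q k : setup m r p q k -> forall x, 0 < x < 1 ->
  is_derive (fun s => r s * r s) x (2 * (x * dfm m r p x / m)).
Proof.
  intros S x Hx. pose proof S as [Hm [Hr _]].
  apply der_eq with (p x * r x + r x * p x). apply der_mult; auto.
  unfold dfm. field. lra.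
Qed.

Lemma L5 m r p q k : setup m r p q k -> forall x, 0 < x < 1 -> 0 <= dfm m r p x.
Proof.
  intros S x0 Hx0. pose proof S as [Hm _].
  destruct (Rle_dec 0 (dfm m r p x0)) as [|Hn]; auto. exfalso.
  destruct (Req_dec (r x0) 0) as [Hz|Hz].
  { apply Hn. unfold dfm. rewrite Hz. right; field. lra. }
  destruct (L4 m r p q k S (r x0 * r x0)) as [e0 [He0 He]]. nra.
  set (e := Rmin e0 x0 / 2).
  assert (0 < e < x0 /\ e < e0).
  { unfold e. pose proof (Rmin_l e0 x0). pose proof (Rmin_r e0 x0).
    assert (0 < Rmin e0 x0) by (apply Rmin_pos; lra). lra. }
  specialize (He e ltac:(lra)).
  assert (- (r e * r e) <= - (r x0 * r x0)).
  { apply (mono_cl (fun s => - (r s * r s)) (fun s => - (2 * (s * dfm m r p s / m))) e x0).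
    lra.
    - intros t Ht. apply (is_derive_opp (fun s => r s * r s)). apply (Pder m r p q k S). lra.
    - intros t Ht. assert (dfm m r p t <= dfm m r p x0) by (apply (L3 m r p q k S); lra).
      assert (0 <= t * (- dfm m r p t) / m) by (apply Rdiv_le_0_compat; nra).
      assert (- (2 * (t * dfm m r p t / m)) = 2 * (t * (- dfm m r p t) / m)) by (field; lra).
      lra. }
  lra.
Qed.

Lemma L6 m r p q k : setup m r p q k -> forall x, 0 < x < 1 ->
  r x * r x <= x ^ 2 * dfm m r p x / m.
Proof.
  intros S x Hx. pose proof S as [Hm _].
  destruct (Rle_dec (r x * r x) (x ^ 2 * dfm m r p x / m)) as [|Hn]; auto. exfalso.
  apply Rnot_le_lt in Hn.
  remember (dfm m r p x) as D eqn:HDe.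
  destruct (L4 m r p q k S (r x * r x - x ^ 2 * D / m)) as [e0 [He0 He]]. lra.
  set (e := Rmin e0 x / 2).
  assert (0 < e < x /\ e < e0).
  { unfold e. pose proof (Rmin_l e0 x). pose proof (Rmin_r e0 x).
    assert (0 < Rmin e0 x) by (apply Rmin_pos; lra). lra. }
  specialize (He e ltac:(lra)).
  assert (HD : 0 <= D) by (rewrite HDe; apply (L5 m r p q k S); lra).
  assert (- (r e * r e - e ^ 2 * D / m) <= - (r x * r x - x ^ 2 * D / m)).
  { apply (mono_cl (fun s => - (r s * r s - s ^ 2 * D / m))
      (fun s => - (2 * (s * dfm m r p s / m) - (2 * s) * D / m)) e x).
    lra.
    - intros t Ht. apply (is_derive_opp (fun s => r s * r s - s ^ 2 * D / m)).
      apply der_minus. apply (Pder m r p q k S). lra.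
      apply der_eq with (D / m * (2 * t)).
      + apply (is_derive_ext (fun s => D / m * (s * s))). intros; simpl; field; lra.
        apply is_derive_scal. apply der_eq with (1 * t + t * 1). apply der_mult; apply der_id. ring.
      + field; lra.
    - intros t Ht. assert (dfm m r p t <= D) by (rewrite HDe; apply (L3 m r p q k S); lra).
      assert (0 <= t * (D - dfm m r p t) / m) by (apply Rdiv_le_0_compat; nra).
      assert (- (2 * (t * dfm m r p t / m) - 2 * t * D / m) = 2 * (t * (D - dfm m r p t) / m))
        by (field; lra). lra. }
  assert (0 <= e ^ 2 * D / m) by (apply Rdiv_le_0_compat; nra).
  lra.
Qed.


Lemma der_log_comb (f df : R -> R) (c x : R) : 0 < x -> is_derive f x (df x) ->
  is_derive (fun s => f s - c * ln s) x (df x - c / x).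
Proof.
  intros Hx H. apply der_minus; auto. unfold Rdiv. apply is_derive_scal. apply is_derive_ln; auto.
Qed.

Lemma L7 m r p q k g : setup m r p q k ->
  (forall x, 0 < x < 1 -> k x = g (dfm m r p x)) ->
  (forall a b, exists K, forall s, a <= s <= b -> g s <= K) ->
  forall eps, 0 < eps -> exists x0, 0 < x0 < 1 /\ dfm m r p x0 < eps.
Proof.
  intros S Hkg Hg eps Heps. pose proof S as [Hm _].
  destruct (classic (exists x0, 0 < x0 < 1 /\ dfm m r p x0 < eps)) as [|Hn]; auto. exfalso.
  assert (Hge : forall x, 0 < x < 1 -> eps <= dfm m r p x).
  { intros x Hx. destruct (Rle_dec eps (dfm m r p x)) as [|Hl]; auto.
    exfalso; apply Hn; exists x; split; auto; lra. }
  remember (dfm m r p (1/2)) as D eqn:HDe.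
  destruct (Hg 0 D) as [K HK].
  remember (Rmax K 0) as K'. assert (HK' : K <= K' /\ 0 <= K') by (subst; split; [apply Rmax_l|apply Rmax_r]).
  assert (HD0 : eps <= D) by (subst; apply Hge; lra).
  remember (1 / m + K' * D) as B.
  assert (HB : 0 < B) by (subst; assert (0 < 1/m) by (apply Rdiv_lt_0_compat; lra); nra).
  remember (2 * (m - 1) * eps / (m * B)) as c.
  assert (Hc : 0 < c) by (subst; apply Rdiv_lt_0_compat; nra).
  assert (Hdd : forall x, 0 < x <= 1/2 -> c / x <= ddf m r p q x).
  { intros x Hx.
    destruct (L2 m r p q k S x ltac:(lra)) as [HN [HA [HN2 Hdd0]]].
    assert (Hrp : r x * p x = x * dfm m r p x / m) by (unfold dfm; field; lra).
    assert (Hd1 : eps <= dfm m r p x) by (apply Hge; lra).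
    assert (Hd2 : dfm m r p x <= D) by (subst D; apply (L3 m r p q k S); lra).
    assert (Hk1 : k x <= K') by (rewrite Hkg by lra; assert (g (dfm m r p x) <= K) by (apply HK; split; lra); lra).
    assert (Hk0 : 0 <= k x) by (destruct S as [_ [_ [_ [_ [Hk _]]]]]; apply Hk; lra).
    assert (Hr2 : r x * r x <= x ^ 2 * D / m).
    { apply Rle_trans with (x ^ 2 * dfm m r p x / m). apply (L6 m r p q k S); lra.
      apply Rmult_le_compat_r. left; apply Rinv_0_lt_compat; lra. nra. }
    assert (HA2 : x ^ 2 / m + m * k x * (r x * r x) <= x ^ 2 * B).
    { assert (m * k x * (r x * r x) <= m * K' * (x ^ 2 * D / m)).
      { apply Rmult_le_compat. nra. nra. nra. auto. }
      assert (m * K' * (x ^ 2 * D / m) = K' * D * x ^ 2) by (field; lra).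
      subst B. assert (x ^ 2 * (1 / m + K' * D) = x ^ 2 / m + K' * D * x ^ 2) by (field; lra).
      lra. }
    remember (ddf m r p q x) as dd. rewrite Hrp in HN2.
    assert (E1 : 2 * (m - 1) * (x * eps / m) <= dd * (x ^ 2 * B)).
    { assert (2 * (m - 1) * (x * eps / m) <= 2 * (m - 1) * (x * dfm m r p x / m)).
      { apply Rmult_le_compat_l. lra. apply Rmult_le_compat_r. left; apply Rinv_0_lt_compat; lra. nra. }
      assert (dd * (x ^ 2 / m + m * k x * (r x * r x)) <= dd * (x ^ 2 * B)) by (apply Rmult_le_compat_l; auto).
      lra. }
    apply (Rmult_le_reg_r (x * x * B)). nra.
    replace (c / x * (x * x * B)) with (x * (2 * (m - 1) * eps / m)) by (subst c; field; lra).
    replace (dd * (x * x * B)) with (dd * (x ^ 2 * B)) by ring.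
    replace (x * (2 * (m - 1) * eps / m)) with (2 * (m - 1) * (x * eps / m)) by (field; lra). lra. }
  remember (D / c - ln (/ 2) + 1) as T.
  assert (HT : - T < ln (/ 2)).
  { subst T. assert (0 <= D / c) by (apply Rdiv_le_0_compat; lra). lra. }
  assert (He : 0 < exp (- T) < / 2).
  { split. apply exp_pos. rewrite <- (exp_ln (/ 2)) by lra. apply exp_increasing; auto. }
  assert (Hmono : dfm m r p (exp (- T)) - c * ln (exp (- T)) <= D - c * ln (1 / 2)).
  { rewrite HDe. apply (mono_cl (fun s => dfm m r p s - c * ln s) (fun s => ddf m r p q s - c / s) (exp (- T)) (1/2)). lra.
    - intros t Ht. apply der_log_comb. lra. apply (L1 m r p q k S). lra.
    - intros t Ht. specialize (Hdd t ltac:(lra)). lra. }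
  rewrite ln_exp in Hmono. replace (1 / 2) with (/ 2) in Hmono by field.
  assert (eps <= dfm m r p (exp (- T))) by (apply Hge; lra).
  assert (c * T = D - c * ln (/ 2) + c) by (subst T; field; lra).
  lra.
Qed.

Lemma L8 m r p q k g : setup m r p q k ->
  (forall x, 0 < x < 1 -> k x = g (dfm m r p x)) ->
  (forall a b, exists K, forall s, a <= s <= b -> g s <= K) ->
  forall eps, 0 < eps -> exists x0, 0 < x0 < 1 /\
    forall x, 0 < x <= x0 -> 0 <= dfm m r p x < eps.
Proof.
  intros S Hkg Hg eps Heps. destruct (L7 m r p q k g S Hkg Hg eps Heps) as [x0 [Hx0 Hd]].
  exists x0. split; auto. intros x Hx. split. apply (L5 m r p q k S); lra.
  assert (dfm m r p x <= dfm m r p x0) by (apply (L3 m r p q k S); lra). lra.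
Qed.


Lemma der_comp (f g : R -> R) (x df dg : R) : is_derive f (g x) df -> is_derive g x dg ->
  is_derive (fun t => f (g t)) x (dg * df).
Proof. intros. apply (is_derive_comp f g x df dg); auto. Qed.

Lemma Gder (G : nat -> R -> R) :
  (forall n x, True -> deriv_within (fun _ => True) (G n) (G (S n) x) x) ->
  forall n x, is_derive (G n) x (G (S n) x).
Proof.
  intros HG n x. apply (deriv_within_is_derive (fun _ => True) _ _ x (x - 1) (x + 1)); auto. lra.
Qed.

Lemma rho_G2 (rho : R -> R) (G : nat -> R -> R) :
  (forall x, True -> G 0%nat x = rho x) -> (forall n x, is_derive (G n) x (G (S n) x)) ->
  forall s, Derive_n rho 2 s = G 2%nat s.
Proof.
  intros H0 HG s. change (Derive (Derive rho) s = G 2%nat s).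
  assert (E : forall y, Derive rho y = G 1%nat y).
  { intros y. apply is_derive_unique.
    apply (is_derive_ext (G 0%nat)). intros; apply H0; auto. apply HG. }
  rewrite (Derive_ext _ _ s E). apply is_derive_unique. apply HG.
Qed.

Lemma G2_nonneg (rho : R -> R) (G : nat -> R -> R) :
  convex_fun rho ->
  (forall x, True -> G 0%nat x = rho x) ->
  (forall n x, True -> deriv_within (fun _ => True) (G n) (G (S n) x) x) ->
  forall s, 0 <= G 2%nat s.
Proof.
  intros Hconv H0 HGw x0. pose proof (Gder G HGw) as HG.
  destruct (Rle_dec 0 (G 2%nat x0)) as [|Hn]; auto. exfalso. apply Rnot_le_lt in Hn.
  destruct (deriv_within_cont _ _ _ _ (HGw 2%nat x0 I) (- G 2%nat x0 / 2)) as [eta [Heta Hc]]. lra.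
  assert (Hneg : forall y, Rabs (y - x0) < eta -> G 2%nat y < 0).
  { intros y Hy. specialize (Hc y I Hy). apply Rabs_def2 in Hc. lra. }
  assert (Hrho : forall y, is_derive rho y (G 1%nat y)).
  { intros y. apply (is_derive_ext (G 0%nat)). intros; apply H0; auto. apply HG. }
  set (g := fun t => rho (x0 + t) + rho (x0 - t) - 2 * rho x0).
  set (dg := fun t => G 1%nat (x0 + t) - G 1%nat (x0 - t)).
  assert (Hg : forall t, is_derive g t (dg t)).
  { intros t. unfold g, dg.
    apply der_eq with ((1 * G 1%nat (x0 + t) + (-1) * G 1%nat (x0 - t)) - 0); [|ring].
    apply der_minus; [apply der_plus|].
    - apply (der_comp rho (fun u => x0 + u)). apply Hrho.
      apply der_eq with (0 + 1); [|ring]. apply der_plus. apply der_const. apply der_id.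
    - apply (der_comp rho (fun u => x0 - u)). apply Hrho.
      apply der_eq with (0 - 1); [|ring]. apply der_minus. apply der_const. apply der_id.
    - apply der_const. }
  assert (Hdg : forall c, 0 < c < eta -> dg c < 0).
  { intros c Hc0. pose proof (MVT_gen (G 1%nat) (x0 - c) (x0 + c) (G 2%nat)) as HM. cbv zeta in HM.
    rewrite Rmin_left, Rmax_right in HM by lra.
    destruct HM as [xi [Hxi Heq]].
    - intros; apply HG.
    - intros; apply (der_cont _ _ _ (HG 1%nat x)).
    - unfold dg. rewrite Heq. assert (G 2%nat xi < 0) by (apply Hneg; apply Rabs_def1; lra). nra. }
  assert (Hdg0 : dg 0 = 0) by (unfold dg; rewrite Rplus_0_r, Rminus_0_r; ring).
  set (h := eta / 2).
  assert (Hg0 : g 0 = 0) by (unfold g; rewrite Rplus_0_r, Rminus_0_r; ring).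
  assert (HB : g (h / 2) <= 0).
  { pose proof (MVT_gen g 0 (h / 2) dg) as HM. cbv zeta in HM.
    rewrite Rmin_left, Rmax_right in HM by (unfold h; lra).
    destruct HM as [c [Hc1 Heq]].
    - intros; apply Hg.
    - intros; apply (der_cont _ _ _ (Hg x)).
    - destruct (Req_dec c 0) as [->|Hc0].
      + rewrite Hdg0 in Heq. lra.
      + assert (dg c < 0) by (apply Hdg; unfold h in *; lra). unfold h in *. nra. }
  assert (HC : g h < g (h / 2)).
  { pose proof (MVT_gen g (h / 2) h dg) as HM. cbv zeta in HM.
    rewrite Rmin_left, Rmax_right in HM by (unfold h; lra).
    destruct HM as [c [Hc1 Heq]].
    - intros; apply Hg.
    - intros; apply (der_cont _ _ _ (Hg x)).
    - assert (dg c < 0) by (apply Hdg; unfold h in *; lra). unfold h in *. nra. }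
  assert (Hcv := Hconv (x0 + h) (x0 - h) (1 / 2) ltac:(lra)).
  replace (1 / 2 * (x0 + h) + (1 - 1 / 2) * (x0 - h)) with x0 in Hcv by field.
  unfold g in HC, HB. clearbody g dg h. lra.
Qed.

Lemma G2_bound (G : nat -> R -> R) :
  (forall n x, is_derive (G n) x (G (S n) x)) ->
  forall a b, exists K, forall s, a <= s <= b -> G 2%nat s <= K.
Proof.
  intros HG a b. destruct (Rle_dec a b) as [Hab|Hab].
  - destruct (continuity_ab_maj (G 2%nat) a b Hab) as [x [Hx _]].
    + intros c _. apply (der_cont _ _ _ (HG 2%nat c)).
    + exists (G 2%nat x). exact Hx.
  - exists 0. intros s Hs. lra.
Qed.


Lemma L9 m r p q k : setup m r p q k -> cont_within Icc01 r 1 -> r 1 = 1 ->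
  (forall x, 0 < x < 1 -> 0 < dfm m r p x) -> forall x, 0 < x < 1 -> 0 < r x /\ 0 < p x.
Proof.
  intros S Hc1 Hr1 Hpos. pose proof S as [Hm [Hr _]].
  assert (Hnz : forall x, 0 < x < 1 -> r x <> 0).
  { intros x Hx Hz. specialize (Hpos x Hx). unfold dfm in Hpos. rewrite Hz in Hpos.
    replace (m * 0 * p x / x) with 0 in Hpos by (field; lra). lra. }
  assert (Hrpos : forall x, 0 < x < 1 -> 0 < r x).
  { intros x Hx. destruct (Rlt_dec 0 (r x)) as [|Hn]; auto. exfalso.
    assert (Hneg : r x < 0) by (pose proof (Hnz x Hx); lra).
    destruct (Hc1 (1/2)) as [d [Hd Hd1]]. lra.
    set (y := Rmax ((x + 1) / 2) (1 - d / 2)).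
    assert (Hy : x < y < 1 /\ 1 - y < d).
    { unfold y. pose proof (Rmax_l ((x + 1) / 2) (1 - d / 2)). pose proof (Rmax_r ((x + 1) / 2) (1 - d / 2)).
      destruct (Rmax_Rle ((x + 1) / 2) (1 - d / 2) ((x+1)/2)) as [_ Hm2].
      unfold Rmax. destruct (Rle_dec ((x + 1) / 2) (1 - d / 2)); lra. }
    assert (Hry : 0 < r y).
    { assert (Icc01 y) by (unfold Icc01; lra). assert (Rabs (y - 1) < d) by (apply Rabs_def1; lra).
      specialize (Hd1 y H H0). rewrite Hr1 in Hd1. apply Rabs_def2 in Hd1. lra. }
    destruct (Ranalysis5.IVT_interv r x y) as [z [Hz Hz0]].
    - intros a Ha. apply (der_cont r a (p a)). apply Hr. lra.
    - lra.
    - auto.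
    - auto.
    - apply (Hnz z); auto. lra. }
  intros x Hx. split; auto. specialize (Hpos x Hx). specialize (Hrpos x Hx).
  unfold dfm in Hpos.
  destruct (Rlt_dec 0 (p x)) as [|Hn]; auto. exfalso.
  assert (m * r x * p x <= 0) by (assert (0 < m * r x) by nra; nra).
  assert (0 <= - (m * r x * p x) / x) by (apply Rdiv_le_0_compat; lra).
  replace (- (m * r x * p x) / x) with (- (m * r x * p x / x)) in H0 by (field; lra). lra.
Qed.

Lemma delayed_smooth (r : R -> R) (F : nat -> R -> R) (dl : R) : 0 < dl < 1 ->
  (forall x, 0 <= x <= dl -> r x = 0) ->
  (forall x, Ioc01 x -> F 0%nat x = r x) ->
  (forall n x, Ioc01 x -> deriv_within Ioc01 (F n) (F (S n) x) x) ->
  smooth_on Icc01 r.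
Proof.
  intros Hdl Hz HF0 HF.
  assert (Z : forall n x, 0 < x <= dl -> F n x = 0).
  { induction n as [|n IH]; intros x Hx.
    - rewrite HF0 by (unfold Ioc01; lra). apply Hz; lra.
    - set (l := F (S n) x).
      assert (Hl : forall eps, 0 < eps -> Rabs l <= eps).
      { intros eps Heps. destruct (HF n x ltac:(unfold Ioc01; lra) eps Heps) as [d [Hd Hd1]].
        set (y := x - Rmin d x / 2).
        assert (Hy : 0 < y < x /\ x - y < d).
        { unfold y. pose proof (Rmin_l d x). pose proof (Rmin_r d x).
          assert (0 < Rmin d x) by (apply Rmin_pos; lra). lra. }
        assert (Ioc01 y) by (unfold Ioc01; lra).
        assert (Rabs (y - x) < d) by (apply Rabs_def1; lra).
        specialize (Hd1 y H H0). rewrite (IH y), (IH x) in Hd1 by lra.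
        replace (0 - 0 - F (S n) x * (y - x)) with (l * (x - y)) in Hd1 by (unfold l; ring).
        rewrite Rabs_mult in Hd1. rewrite (Rabs_left (y - x)) in Hd1 by lra.
        rewrite (Rabs_right (x - y)) in Hd1 by lra.
        replace (- (y - x)) with (x - y) in Hd1 by ring.
        apply (Rmult_le_reg_r (x - y)); lra. }
      fold l. destruct (Req_dec l 0) as [|Hn]; auto. exfalso.
      specialize (Hl (Rabs l / 2)). pose proof (Rabs_pos_lt l Hn). lra. }
  exists (fun n x => if Rle_dec x 0 then 0 else F n x). split.
  - intros x Hx. unfold Icc01 in Hx. destruct (Rle_dec x 0).
    + symmetry; apply Hz; lra.
    + apply HF0; unfold Ioc01; lra.
  - intros n x Hx. unfold Icc01 in Hx. destruct (Rle_dec x 0) as [Hx0|Hx0].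
    + intros eps Heps. exists dl. split; [lra|]. intros y Hy Hyd. unfold Icc01 in Hy.
      assert (x = 0) by lra. subst x.
      assert (Hv : (if Rle_dec y 0 then 0 else F n y) = 0).
      { destruct (Rle_dec y 0); auto. apply Z. rewrite Rminus_0_r in Hyd.
        rewrite Rabs_right in Hyd; lra. }
      rewrite Hv. destruct (Rle_dec 0 0); [|lra].
      replace (0 - 0 - 0 * (y - 0)) with 0 by ring. rewrite Rabs_R0.
      pose proof (Rabs_pos (y - 0)). nra.
    + intros eps Heps. destruct (HF n x ltac:(unfold Ioc01; lra) eps Heps) as [d [Hd Hd1]].
      exists (Rmin d x). split. apply Rmin_pos; lra.
      intros y Hy Hyd. pose proof (Rmin_l d x). pose proof (Rmin_r d x).
      apply Rabs_def2 in Hyd as Hyd'.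
      destruct (Rle_dec y 0); [lra|]. destruct (Rle_dec x 0); [lra|].
      apply Hd1. unfold Ioc01, Icc01 in *; lra. lra.
Qed.


Lemma L10 m r p q k : setup m r p q k -> (forall x, 0 < x < 1 -> 0 < r x) ->
  forall x, 0 < x < 1 -> p x <= m ^ 2 * sqrt (dfm m r p x / m).
Proof.
  intros S Hpos x Hx. pose proof S as [Hm [Hr [Hp [HE [Hk _]]]]].
  assert (HD : 0 <= dfm m r p x) by (apply (L5 m r p q k S); lra).
  assert (HDm : 0 <= dfm m r p x / m) by (apply Rdiv_le_0_compat; lra).
  remember (sqrt (dfm m r p x / m)) as Sq.
  assert (HSq0 : 0 <= Sq) by (subst; apply sqrt_pos).
  assert (HSq2 : Sq * Sq = dfm m r p x / m) by (subst; apply sqrt_sqrt; auto).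
  assert (Hrs : forall s, 0 < s <= x -> r s <= s * Sq).
  { intros s Hs. assert (r s * r s <= s ^ 2 * dfm m r p s / m) by (apply (L6 m r p q k S); lra).
    assert (dfm m r p s <= dfm m r p x) by (apply (L3 m r p q k S); lra).
    assert (s ^ 2 * dfm m r p s / m <= s ^ 2 * dfm m r p x / m).
    { apply Rmult_le_compat_r. left; apply Rinv_0_lt_compat; lra. apply Rmult_le_compat_l; nra. }
    assert (s ^ 2 * dfm m r p x / m = (s * Sq) * (s * Sq)) by (replace ((s * Sq) * (s * Sq)) with (s * s * (Sq * Sq)) by ring; rewrite HSq2; field; lra).
    assert (0 < r s) by (apply Hpos; lra). assert (0 <= s * Sq) by nra. nra. }
  assert (Hpq : forall s, 0 < s <= x -> p s + s * q s <= m ^ 2 * Sq).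
  { intros s Hs. assert (Hs1 : 0 < s < 1) by lra. specialize (HE s Hs1).
    destruct (L2 m r p q k S s Hs1) as [_ [_ [_ Hdd]]].
    assert (0 < r s) by (apply Hpos; lra). specialize (Hk s Hs1).
    assert (0 <= m * k s * ddf m r p q s * r s) by (apply Rmult_le_pos; [apply Rmult_le_pos; [apply Rmult_le_pos|]|]; lra).
    assert (m ^ 2 * r s / s <= m ^ 2 * Sq).
    { apply Rmult_le_reg_r with s; [lra|].
      replace (m ^ 2 * r s / s * s) with (m ^ 2 * r s) by (field; lra).
      specialize (Hrs s Hs). assert (0 <= m ^ 2) by nra. nra. }
    lra. }
  assert (Hphi : forall e, 0 < e < x -> x * p x - m ^ 2 * Sq * x <= e * p e - m ^ 2 * Sq * e).
  { intros e He.
    assert (- (e * p e - m ^ 2 * Sq * e) <= - (x * p x - m ^ 2 * Sq * x)); [|lra].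
    apply (mono_cl (fun s => - (s * p s - m ^ 2 * Sq * s))
                   (fun s => - ((1 * p s + s * q s) - m ^ 2 * Sq * 1)) e x). lra.
    - intros t Ht. apply (is_derive_opp (fun s => s * p s - m ^ 2 * Sq * s)).
      apply der_minus. apply (der_mult (fun s => s) p). apply der_id. apply Hp; lra.
      apply is_derive_scal. apply der_id.
    - intros t Ht. specialize (Hpq t ltac:(lra)). lra. }
  assert (Hlim : forall eta, 0 < eta -> exists e, 0 < e < x /\ e * p e < eta).
  { intros eta Heta. destruct (classic (exists e, 0 < e < x /\ e * p e < eta)) as [|Hn]; auto.
    exfalso. assert (Hge : forall e, 0 < e < x -> eta <= e * p e).
    { intros e He. destruct (Rle_dec eta (e * p e)); auto. exfalso; apply Hn; exists e; split; auto; lra. }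
    remember (x / 2) as x2. remember (r x2 - eta * ln x2) as A.
    remember (Rmax (- ln x2) (A / eta) + 1) as T.
    assert (HT1 : - ln x2 < T) by (subst T; pose proof (Rmax_l (- ln x2) (A / eta)); lra).
    assert (HT2 : A / eta + 1 <= T) by (subst T; pose proof (Rmax_r (- ln x2) (A / eta)); lra).
    assert (He : 0 < exp (- T) < x2).
    { split. apply exp_pos. rewrite <- (exp_ln x2) by lra. apply exp_increasing; lra. }
    assert (Hmono : r (exp (- T)) - eta * ln (exp (- T)) <= r x2 - eta * ln x2).
    { apply (mono_cl (fun s => r s - eta * ln s) (fun s => p s - eta / s) (exp (- T)) x2). lra.
      - intros t Ht. apply der_log_comb. lra. apply Hr; lra.
      - intros t Ht. assert (eta / t <= p t); [|lra].
        apply Rmult_le_reg_r with t; [lra|].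
        replace (eta / t * t) with eta by (field; lra). specialize (Hge t ltac:(lra)). lra. }
    rewrite ln_exp in Hmono.
    assert (0 < r (exp (- T))) by (apply Hpos; lra).
    assert (eta * (A / eta + 1) <= eta * T) by (apply Rmult_le_compat_l; lra).
    replace (eta * (A / eta + 1)) with (A + eta) in H0 by (field; lra).
    lra. }
  assert (Hfin : x * p x - m ^ 2 * Sq * x <= 0).
  { destruct (Rle_dec (x * p x - m ^ 2 * Sq * x) 0) as [|Hn]; auto. exfalso.
    destruct (Hlim (x * p x - m ^ 2 * Sq * x)) as [e [He He2]]. lra.
    specialize (Hphi e He). assert (0 <= m ^ 2 * Sq * e) by (assert (0 <= m^2) by nra; apply Rmult_le_pos; [nra|lra]).
    lra. }
  apply Rmult_le_reg_r with x; [lra|]. lra.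
Qed.

Lemma L12 m r p q k g : setup m r p q k ->
  (forall x, 0 < x < 1 -> k x = g (dfm m r p x)) ->
  (forall a b, exists K, forall s, a <= s <= b -> g s <= K) ->
  (forall x, 0 < x < 1 -> 0 < r x) ->
  forall eps, 0 < eps -> exists dl, 0 < dl < 1 /\
    forall y, 0 < y < dl -> Rabs (p y) < eps /\ Rabs (r y) <= eps * y.
Proof.
  intros S Hkg Hg Hpos eps Heps. pose proof S as [Hm _].
  assert (Hm3 : 0 < m ^ 3) by (apply pow_lt; lra).
  destruct (L8 m r p q k g S Hkg Hg (eps ^ 2 / m ^ 3)) as [x0 [Hx0 Hd]].
  { apply Rdiv_lt_0_compat; nra. }
  exists x0. split; auto. intros y Hy. specialize (Hd y ltac:(lra)).
  assert (Hy1 : 0 < y < 1) by lra.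
  remember (dfm m r p y) as d.
  assert (Hdm : d / m < (eps / m ^ 2) * (eps / m ^ 2)).
  { replace ((eps / m ^ 2) * (eps / m ^ 2)) with ((eps ^ 2 / m ^ 3) / m) by (field; lra).
    apply Rmult_lt_compat_r. apply Rinv_0_lt_compat; lra. lra. }
  assert (Hr0 : 0 < r y) by (apply Hpos; auto).
  assert (Hp0 : 0 <= p y).
  { destruct (Rle_dec 0 (p y)) as [|Hn]; auto. exfalso.
    assert (d = m * r y * p y / y) by (subst; reflexivity).
    assert (m * r y * p y < 0) by (assert (0 < m * r y) by nra; nra).
    assert (0 < - (m * r y * p y) / y) by (apply Rdiv_lt_0_compat; lra).
    replace (- (m * r y * p y) / y) with (- (m * r y * p y / y)) in H1 by (field; lra). lra. }
  split.
  - rewrite Rabs_right by lra.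
    pose proof (L10 m r p q k S Hpos y Hy1) as Hb. rewrite <- Heqd in Hb.
    assert (HDm : 0 <= d / m) by (apply Rdiv_le_0_compat; lra).
    remember (sqrt (d / m)) as Sq.
    assert (0 <= Sq) by (subst; apply sqrt_pos).
    assert (Sq * Sq = d / m) by (subst; apply sqrt_sqrt; auto).
    assert (0 < eps / m ^ 2) by (apply Rdiv_lt_0_compat; nra).
    assert (Sq < eps / m ^ 2) by nra.
    assert (m ^ 2 * Sq < m ^ 2 * (eps / m ^ 2)) by (apply Rmult_lt_compat_l; nra).
    replace (m ^ 2 * (eps / m ^ 2)) with eps in H3 by (field; lra). lra.
  - rewrite Rabs_right by lra.
    pose proof (L6 m r p q k S y Hy1) as Hb. rewrite <- Heqd in Hb.
    assert (Hb2 : r y * r y <= y ^ 2 * (d / m)) by (unfold Rdiv in *; lra).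
    assert (Hm4 : eps / m ^ 2 <= eps).
    { assert (1 <= m ^ 2) by nra. apply Rmult_le_reg_r with (m ^ 2); [nra|].
      replace (eps / m ^ 2 * m ^ 2) with eps by (field; lra). nra. }
    assert (0 < eps / m ^ 2) by (apply Rdiv_lt_0_compat; nra).
    assert (d / m <= eps * eps) by nra.
    assert (r y * r y <= (eps * y) * (eps * y)) by nra.
    destruct (Rle_dec (r y) (eps * y)) as [|Hn]; auto. exfalso.
    assert (0 < eps * y) by nra.
    assert ((eps * y) * (eps * y) < r y * r y) by (apply Rmult_le_0_lt_compat; lra). lra.
Qed.


Lemma L1a m (r p q : R -> R) x : is_derive r x (p x) -> is_derive p x (q x) -> 0 < x ->
  is_derive (dfm m r p) x (ddf m r p q x).
Proof.
  intros Hr Hp Hx. unfold dfm.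
  apply der_eq with (((m * p x * p x + m * r x * q x) * x - m * r x * p x * 1) / x ^ 2).
  - apply (is_derive_div (fun t => m * r t * p t) (fun t => t)); [| apply der_id | lra].
    apply der_eq with (m * p x * p x + m * r x * q x).
    + apply (der_mult (fun t => m * r t) p); auto. apply is_derive_scal; auto.
    + ring.
  - unfold ddf. field. lra.
Qed.

Lemma deriv_within_ext D (f g : R -> R) l x : (forall y, D y -> f y = g y) -> D x ->
  deriv_within D f l x -> deriv_within D g l x.
Proof.
  intros He Dx Hd eps Heps. destruct (Hd eps Heps) as [d [Hd0 Hd1]]. exists d; split; auto.
  intros y Dy Hy. rewrite <- (He y Dy), <- (He x Dx). auto.
Qed.

Lemma Ioc_Icc_deriv (f : R -> R) l x : 0 < x -> deriv_within Ioc01 f l x -> deriv_within Icc01 f l x.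
Proof.
  intros Hx Hd eps Heps. destruct (Hd eps Heps) as [d [Hd0 Hd1]].
  exists (Rmin d x). split. apply Rmin_pos; lra.
  intros y Hy Hyd. pose proof (Rmin_l d x). pose proof (Rmin_r d x).
  apply Rabs_def2 in Hyd as Hyd'. apply Hd1. unfold Ioc01, Icc01 in *; lra. lra.
Qed.

Lemma Ioc_Icc_cont (f : R -> R) x : 0 < x -> cont_within Ioc01 f x ->
  cont_within Icc01 (fun y => if Rle_dec y 0 then 0 else f y) x.
Proof.
  intros Hx Hd eps Heps. destruct (Hd eps Heps) as [d [Hd0 Hd1]].
  exists (Rmin d x). split. apply Rmin_pos; lra.
  intros y Hy Hyd. pose proof (Rmin_l d x). pose proof (Rmin_r d x).
  apply Rabs_def2 in Hyd as Hyd'.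
  destruct (Rle_dec y 0); [lra|]. destruct (Rle_dec x 0); [lra|].
  apply Hd1. unfold Ioc01, Icc01 in *; lra. lra.
Qed.

Lemma L13 m r p q k : setup m r p q k -> cont_within Icc01 r 1 -> r 1 = 1 ->
  cont_within Ioc01 p 1 -> (forall x, 0 < x < 1 -> 0 < dfm m r p x) -> 0 < p 1.
Proof.
  intros S Hc1 Hr1 Hp1 Hpos. pose proof S as [Hm _].
  remember (dfm m r p (1/2)) as c0.
  assert (Hc0 : 0 < c0) by (subst; apply Hpos; lra).
  assert (He2 : 0 < c0 / (8 * m)) by (apply Rdiv_lt_0_compat; lra).
  destruct (Hc1 1) as [d1 [Hd1 Hd1']]. lra.
  destruct (Hp1 (c0 / (8 * m)) He2) as [d2 [Hd2 Hd2']].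
  remember (1 - Rmin (1/4) (Rmin d1 d2) / 2) as x.
  assert (Hx : 7/8 <= x < 1 /\ 1 - x < d1 /\ 1 - x < d2).
  { subst x. pose proof (Rmin_l (1/4) (Rmin d1 d2)). pose proof (Rmin_r (1/4) (Rmin d1 d2)).
    pose proof (Rmin_l d1 d2). pose proof (Rmin_r d1 d2).
    assert (0 < Rmin (1/4) (Rmin d1 d2)) by (repeat apply Rmin_pos; lra). lra. }
  assert (Hrx : r x < 2).
  { assert (Icc01 x) by (unfold Icc01; lra). assert (Rabs (x - 1) < d1) by (apply Rabs_def1; lra).
    specialize (Hd1' x H H0). rewrite Hr1 in Hd1'. apply Rabs_def2 in Hd1'. lra. }
  assert (Hpx : Rabs (p x - p 1) < c0 / (8 * m)).
  { apply Hd2'. unfold Ioc01; lra. apply Rabs_def1; lra. }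
  destruct (L9 m r p q k S Hc1 Hr1 Hpos x ltac:(lra)) as [Hr0 Hp0].
  assert (Hdx : c0 <= dfm m r p x) by (subst c0; apply (L3 m r p q k S); lra).
  assert (Hid : p x * (m * r x) = x * dfm m r p x) by (unfold dfm; field; lra).
  assert (H1 : c0 / 2 <= p x * (m * r x)) by nra.
  assert (H2 : p x * (m * r x) < p x * (m * 2)) by (apply Rmult_lt_compat_l; nra).
  assert (H3 : c0 / (4 * m) < p x).
  { apply Rmult_lt_reg_r with (4 * m); [lra|].
    replace (c0 / (4 * m) * (4 * m)) with c0 by (field; lra). nra. }
  apply Rabs_def2 in Hpx.
  assert (c0 / (4 * m) = 2 * (c0 / (8 * m))) by (field; lra). lra.
Qed.


Theorem lemma2p6 (gamma s0 kappa : R) (rho : R -> R) (M : nat) (r : R -> R) :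
  rho_hyp gamma s0 kappa rho ->
  (2 <= M)%nat ->
  strong_solution M rho r ->
  filterlim (dfun M r) (at_right 0) (locally 0) /\
  ((delayed_lift_off r \/ lifts_off_immediately r) /\
   ~ (delayed_lift_off r /\ lifts_off_immediately r)) /\
  (delayed_lift_off r -> smooth_on Icc01 r) /\
  (lifts_off_immediately r ->
     exists r' : R -> R, C1_on_with Icc01 r r' /\ r' 0 = 0).
Proof.
  intros Hrho HM Hsol.
  destruct Hrho as [Hgam [Hs0 [Hkap [[G [HG0 HGw]] [Hconv [Hneg [Hlin Hrho1]]]]]]].
  destruct Hsol as [Hcont [[F [HF0 HF]] [HE [Hr0 Hr1]]]].
  pose proof (Gder G HGw) as HG.
  assert (Hm : 2 <= INR M) by (apply le_INR in HM; simpl in HM; lra).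
  assert (Fd : forall n x, 0 < x < 1 -> is_derive (F n) x (F (S n) x)).
  { apply (smooth_interior F Ioc01 0 1 HF). intros y Hy; unfold Ioc01; lra. }
  assert (Hr : forall x, 0 < x < 1 -> is_derive r x (F 1%nat x)).
  { intros x Hx. apply (is_derive_ext_loc (F 0%nat)).
    - apply filter_imp with (fun t => 0 < t < 1). intros t Ht; apply HF0; unfold Ioc01; lra.
      apply loc_int; auto.
    - apply Fd; auto. }
  assert (HDr : forall x, 0 < x < 1 -> Derive r x = F 1%nat x).
  { intros x Hx. apply is_derive_unique. apply Hr; auto. }
  assert (HDr2 : forall x, 0 < x < 1 -> Derive_n r 2 x = F 2%nat x).
  { intros x Hx. change (Derive (Derive r) x = F 2%nat x). apply is_derive_unique.
    apply (is_derive_ext_loc (F 1%nat)).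
    - apply filter_imp with (fun t => 0 < t < 1). intros t Ht; symmetry; apply HDr; auto.
      apply loc_int; auto.
    - apply Fd; auto. }
  assert (Hdfun : forall x, 0 < x < 1 -> dfun M r x = dfm (INR M) r (F 1%nat) x).
  { intros x Hx. unfold dfun, dfm. rewrite HDr; auto. }
  assert (HDd : forall x, 0 < x < 1 -> Derive (dfun M r) x = ddf (INR M) r (F 1%nat) (F 2%nat) x).
  { intros x Hx. apply is_derive_unique.
    apply (is_derive_ext_loc (dfm (INR M) r (F 1%nat))).
    - apply filter_imp with (fun t => 0 < t < 1). intros t Ht; symmetry; apply Hdfun; auto.
      apply loc_int; auto.
    - apply L1a. apply Hr; auto. apply Fd; auto. lra. }
  assert (S : setup (INR M) r (F 1%nat) (F 2%nat) (fun x => Derive_n rho 2 (dfun M r x))).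
  { split; [auto|]. split; [auto|]. split; [intros; apply Fd; auto|]. split.
    - intros x Hx. specialize (HE x Hx). unfold Lop in HE.
      rewrite HDr, HDr2, HDd in HE by auto. exact HE.
    - split. intros x Hx. rewrite (rho_G2 rho G HG0 HG). apply (G2_nonneg rho G Hconv HG0 HGw).
      split; auto. apply Hcont. unfold Icc01; lra. }
  assert (Hkg : forall x, 0 < x < 1 ->
            (fun x => Derive_n rho 2 (dfun M r x)) x = G 2%nat (dfm (INR M) r (F 1%nat) x)).
  { intros x Hx. simpl. rewrite Hdfun by auto. apply (rho_G2 rho G HG0 HG). }
  pose proof (G2_bound G HG) as Hg.
  assert (Himm : lifts_off_immediately r -> exists r' : R -> R, C1_on_with Icc01 r r' /\ r' 0 = 0).
  { intros Himm.
    assert (Hpos : forall x, 0 < x < 1 -> 0 < r x) by (intros x Hx; apply Himm; unfold Ioc01; lra).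
    pose proof (L12 _ _ _ _ _ _ S Hkg Hg Hpos) as Hsm.
    exists (fun y => if Rle_dec y 0 then 0 else F 1%nat y). split; [split|].
    - intros x Hx. unfold Icc01 in Hx. destruct (Rle_dec x 0) as [Hx0|Hx0].
      + assert (x = 0) by lra. subst x. intros eps Heps.
        destruct (Hsm eps Heps) as [dl [Hdl Hdl1]]. exists dl. split; [lra|].
        intros y Hy Hyd. unfold Icc01 in Hy. rewrite Hr0. rewrite Rminus_0_r in *.
        destruct (Req_dec y 0) as [->|Hy0].
        * rewrite Hr0. replace (0 - 0 * (0 - 0)) with 0 by ring. rewrite Rabs_R0. pose proof (Rabs_pos (0 - 0)). nra.
        * rewrite Rabs_right in Hyd by lra. destruct (Hdl1 y ltac:(lra)) as [_ Hb].
          replace (r y - 0 * (y - 0)) with (r y) by ring. rewrite Rminus_0_r, (Rabs_right y) by lra. exact Hb.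
      + apply Ioc_Icc_deriv. lra.
        apply (deriv_within_ext Ioc01 (F 0%nat)). intros; apply HF0; auto. unfold Ioc01; lra.
        apply HF. unfold Ioc01; lra.
    - intros x Hx. unfold Icc01 in Hx. destruct (Req_dec x 0) as [->|Hx0].
      + intros eps Heps. destruct (Hsm eps Heps) as [dl [Hdl Hdl1]]. exists dl. split; [lra|].
        intros y Hy Hyd. unfold Icc01 in Hy. rewrite Rminus_0_r in Hyd.
        destruct (Rle_dec 0 0); [|lra]. destruct (Rle_dec y 0).
        * replace (0 - 0) with 0 by ring. rewrite Rabs_R0. lra.
        * rewrite Rabs_right in Hyd by lra. destruct (Hdl1 y ltac:(lra)) as [Hb _].
          rewrite Rminus_0_r. exact Hb.
      + apply Ioc_Icc_cont. lra. apply (deriv_within_cont _ _ (F 2%nat x)). apply HF.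
        unfold Ioc01; lra.
    - destruct (Rle_dec 0 0); [auto|lra]. }
  split.
  -
    apply filterlim_locally. intros eps.
    destruct (L8 _ _ _ _ _ _ S Hkg Hg eps (cond_pos eps)) as [x0 [Hx0 Hd]].
    unfold at_right, within. exists (mkposreal x0 (proj1 Hx0)). intros y Hy Hy0.
    unfold ball in Hy |- *; simpl in Hy |- *. unfold AbsRing_ball, abs, minus, plus, opp in Hy |- *.
    simpl in Hy |- *. rewrite Ropp_0, Rplus_0_r in Hy |- *.
    rewrite Rabs_right in Hy by lra.
    rewrite Hdfun by lra. specialize (Hd y ltac:(lra)). rewrite Rabs_right; lra.
  - split; [split|split].
    + destruct (classic (exists x1, 0 < x1 < 1 /\ dfm (INR M) r (F 1%nat) x1 = 0)) as [[x1 [Hx1 Hd1]]|Hn].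
      * left. exists x1. split; auto. intros x Hx.
        destruct (Req_dec x 0) as [->|Hx0]; auto.
        assert (0 <= dfm (INR M) r (F 1%nat) x) by (apply (L5 _ _ _ _ _ S); lra).
        assert (dfm (INR M) r (F 1%nat) x <= dfm (INR M) r (F 1%nat) x1) by (apply (L3 _ _ _ _ _ S); lra).
        assert (r x * r x <= x ^ 2 * dfm (INR M) r (F 1%nat) x / INR M) by (apply (L6 _ _ _ _ _ S); lra).
        assert (dfm (INR M) r (F 1%nat) x = 0) by lra. rewrite H2 in H1.
        replace (x ^ 2 * 0 / INR M) with 0 in H1 by (field; lra). nra.
      * right.
        assert (Hpos : forall x, 0 < x < 1 -> 0 < dfm (INR M) r (F 1%nat) x).
        { intros x Hx. assert (0 <= dfm (INR M) r (F 1%nat) x) by (apply (L5 _ _ _ _ _ S); lra).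
          destruct (Req_dec (dfm (INR M) r (F 1%nat) x) 0) as [Hz|]; [|lra].
          exfalso; apply Hn; exists x; auto. }
        assert (Hc1 : cont_within Icc01 r 1) by (apply Hcont; unfold Icc01; lra).
        intros x Hx. unfold Ioc01 in Hx.
        assert (Hder : deriv_within Ioc01 r (F 1%nat x) x).
        { apply (deriv_within_ext Ioc01 (F 0%nat)). intros; apply HF0; auto. unfold Ioc01; lra.
          apply HF. unfold Ioc01; lra. }
        destruct (Req_dec x 1) as [->|Hx1].
        -- split. lra. exists (F 1%nat 1). split; auto.
           apply (L13 _ _ _ _ _ S Hc1 Hr1); auto.
           apply (deriv_within_cont _ _ (F 2%nat 1)). apply HF. unfold Ioc01; lra.
        -- destruct (L9 _ _ _ _ _ S Hc1 Hr1 Hpos x ltac:(lra)) as [Ha Hb].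
           split; auto. exists (F 1%nat x). split; auto.
    + intros [[dl [Hdl Hz]] Hi]. destruct (Hi dl ltac:(unfold Ioc01; lra)) as [Hp _].
      rewrite Hz in Hp by lra. lra.
    + intros [dl [Hdl Hz]]. apply (delayed_smooth r F dl Hdl Hz HF0 HF).
    + exact Himm.
Qed.
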